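(* Let $A$ be a finite skew brace and let $\Lambda(x_1),\dots,\Lambda(x_k)$ be its $\lambda$-orbits of size greater than $1$. Then \[A^2=\Big\langle \bigcup_{i=1}^k\big(\Lambda(x_i)-\Lambda(x_i)\big)\Big\rangle_+,\] where $\Lambda(x_i)-\Lambda(x_i)=\{u-v: u,v\in\Lambda(x_i)\}$ and $\langle\cdot\rangle_+$ denotes the generated subgroup of $(A,+)$. In particular $|A^2|\ge|\Lambda(x_i)|$ for all $i$.
   Context: A skew brace is a triple $(A,+,\circ)$ where $(A,+)$ and $(A,\circ)$ are groups with $a\circ(b+c)=a\circ b-a+a\circ c$ for all $a,b,c$. $\lambda_a(b)=-a+a\circ b$; the $\lambda$-orbit of $x$ is $\Lambda(x)=\{\lambda_a(x):a\in A\}$. $A^2$ is the subgroup of $(A,+)$ generated by all $a*b=\lambda_a(b)-b$, $a,b\in A$. *)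

(* Defs.v *)
(* The additive group (A,+) of a finite skew brace is modelled
   as a finGroupType gT, whose (multiplicative) group law mulg plays the role
   of +; the inverse x^-1 is -x and 1 is 0.  The second operation \circ is an
   explicit binary operation on gT. *)
From HB Require Import structures.
From mathcomp Require Import all_boot all_fingroup.
Set Implicit Arguments. Unset Strict Implicit. Unset Printing Implicit Defensive.
Local Open Scope group_scope.

Section SkewBrace.
Variable gT : finGroupType.
Variable circ : gT -> gT -> gT.

Definition is_skew_brace : Prop :=
  [/\ (forall a b c, circ a (circ b c) = circ (circ a b) c),
      (exists2 e, (forall a, circ e a = a /\ circ a e = a) &
                  (forall a, exists b, circ a b = e /\ circ b a = e)) &
      (forall a b c, circ a (b * c) = circ a b * a^-1 * circ a c)].

Definition lam (a b : gT) : gT := a^-1 * circ a b.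

Definition lam_orbit (x : gT) : {set gT} := [set lam a x | a : gT].

Definition bstar (a b : gT) : gT := lam a b * b^-1.

Definition A2 : {set gT} := <<[set bstar a b | a : gT, b : gT]>>.

Definition setdiff_self (X : {set gT}) : {set gT} :=
  [set u * v^-1 | u in X, v in X].
End SkewBrace.

(* Main.v *)
Require Import Defs.
From HB Require Import structures.
From mathcomp Require Import all_boot all_fingroup.
Local Open Scope group_scope.

Section Aux.
Variable gT : finGroupType.
Variable circ : gT -> gT -> gT.
Hypothesis H : is_skew_brace circ.

Lemma sb_e : exists2 e, (forall a, circ e a = a /\ circ a e = a) &
                  (forall a, exists b, circ a b = e /\ circ b a = e).
Proof. by case: H. Qed.

Lemma sb_dist a b c : circ a (b * c) = circ a b * a^-1 * circ a c.
Proof. by case: H. Qed.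

Lemma sb_assoc a b c : circ a (circ b c) = circ (circ a b) c.
Proof. by case: H. Qed.

Lemma circ_a1 a : circ a 1 = a.
Proof.
have := sb_dist a 1 1; rewrite mulg1 => E.
have : circ a 1 * 1 = circ a 1 * (a^-1 * circ a 1) by rewrite mulg1 mulgA -E.
move/mulgI => E2.
by apply: (mulgI a^-1); rewrite -E2 mulVg.
Qed.

Lemma sb_unit : (forall a, circ 1 a = a /\ circ a 1 = a) /\
                (forall a, exists b, circ a b = 1 /\ circ b a = 1).
Proof.
case: sb_e => e He Hi.
have e1 : e = 1.
  have := circ_a1 e; have [-> _] := He 1; by [].
by subst e.
Qed.

Lemma circ_1a a : circ 1 a = a.
Proof. by case: sb_unit => He _; case: (He a). Qed.

Lemma lam1 x : lam circ 1 x = x.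
Proof. by rewrite /lam invg1 mul1g circ_1a. Qed.

Lemma circ_inv a b : circ a b^-1 = a * (circ a b)^-1 * a.
Proof.
have := sb_dist a b b^-1; rewrite mulgV circ_a1 => E.
have -> : a * (circ a b)^-1 * a = a * (circ a b)^-1 * (circ a b * a^-1 * circ a b^-1) by rewrite -E.
by rewrite !mulgA mulgKV mulgV mul1g.
Qed.

Lemma lam_comp a b x : lam circ (circ a b) x = lam circ a (lam circ b x).
Proof.
rewrite /lam sb_dist circ_inv sb_assoc.
by rewrite !mulgA mulVg mul1g mulgK.
Qed.
End Aux.

Theorem mainTheorem6 (gT : finGroupType) (circ : gT -> gT -> gT) :
  is_skew_brace circ ->
  A2 circ = << \bigcup_(x : gT | (1 < #|lam_orbit circ x|)%N)
                  setdiff_self (lam_orbit circ x) >>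
  /\ (forall x : gT, (1 < #|lam_orbit circ x|)%N ->
        (#|lam_orbit circ x| <= #|A2 circ|)%N).
Proof.
move=> H.
have xin x : x \in lam_orbit circ x.
  by apply/imsetP; exists 1 => //; rewrite lam1.
split.
  apply/eqP; rewrite eqEsubset; apply/andP; split.
    rewrite gen_subG; apply/subsetP => g /imset2P [a b _ _ ->].
    case: (ltnP 1 #|lam_orbit circ b|) => hc.
      apply: mem_gen; apply/bigcupP; exists b => //.
      by apply/imset2P; exists (lam circ a b) b => //; apply/imsetP; exists a.
    have la : lam circ a b = b.
      have := card_le1P hc b (xin b) (lam circ a b).
      have hin : lam circ a b \in lam_orbit circ b by apply/imsetP; exists a.
      by rewrite hin => /esym/eqP.
    by rewrite /bstar la mulgV group1.
  rewrite gen_subG; apply/subsetP => g /bigcupP [x _] /imset2P [u v].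
  move=> /imsetP [a _ ->] /imsetP [c _ ->] ->.
  have [_ Hi] := @sb_unit _ circ H.
  have [c' [_ Hc]] := Hi c.
  apply: mem_gen; apply/imset2P; exists (circ a c') (lam circ c x) => //.
  by rewrite /bstar -(@lam_comp _ circ H) -(@sb_assoc _ circ H) Hc (@circ_a1 _ circ H).
move=> x _.
rewrite -(card_rcoset _ x^-1); apply: subset_leq_card.
apply/subsetP => g /rcosetP [u /imsetP [a _ ->] ->].
by apply: mem_gen; apply/imset2P; exists a x.
Qed.
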